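(* Let $\Re$ be a commutative Krasner hyperring with identity $1\ne0$ and $\phi:L(\Re)\to L(\Re)\cup\{\emptyset\}$ a function with $\phi\le\phi_3$. If $T$ is a proper $\phi$-primary hyperideal of $\Re$, then $T$ is a $w$-primary hyperideal.
   Context: Krasner hyperring: $(\Re,\oplus)$ canonical hypergroup, $(\Re,\circ)$ commutative semigroup with identity $1\ne0$, $0$ absorbing, distributive. Hyperideals, $L(\Re)$, powers $N^n$ as usual. $\phi_3(N)=N^3$, $\phi_w(N)=\bigcap_{n\ge1}N^n$; $\phi\le\phi_3$ means $\phi(N)\subseteq N^3$ for all $N$. $N$ is $\sigma$-primary if $a\circ b\in N$, $a\circ b\notin\sigma(N)$ imply $a\in N$ or $b^k\in N$ for some $k\in\mathbb{N}$; $w$-primary means $\phi_w$-primary. *)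

(* Defs.v *)
From Stdlib Require Import List.
Import ListNotations.

(* A commutative Krasner hyperring with identity 1 <> 0.
   hplus x y z  means  z \in x (+) y. *)
Record KrasnerHyperring := {
  carrier :> Type;
  hplus : carrier -> carrier -> carrier -> Prop;
  hzero : carrier;
  hneg : carrier -> carrier;
  hmul : carrier -> carrier -> carrier;
  hone : carrier;
  hplus_nonempty : forall x y, exists z, hplus x y z;
  hplus_assoc : forall x y z w,
    (exists u, hplus x y u /\ hplus u z w) <-> (exists v, hplus y z v /\ hplus x v w);
  hplus_comm : forall x y z, hplus x y z <-> hplus y x z;
  hplus_zero : forall x z, hplus hzero x z <-> z = x;
  hplus_neg : forall x, hplus x (hneg x) hzero;
  hplus_neg_unique : forall x y, hplus x y hzero -> y = hneg x;
  hplus_reversible : forall x y z, hplus x y z -> hplus (hneg x) z y /\ hplus z (hneg y) x;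
  hmul_assoc : forall x y z, hmul x (hmul y z) = hmul (hmul x y) z;
  hmul_comm : forall x y, hmul x y = hmul y x;
  hmul_one : forall x, hmul hone x = x;
  hone_neq_zero : hone <> hzero;
  hmul_zero : forall x, hmul hzero x = hzero;
  (* distributivity: z o (x (+) y) = z o x (+) z o y  (as sets) *)
  hmul_distr : forall x y z w,
    (exists u, hplus x y u /\ w = hmul z u) <-> hplus (hmul z x) (hmul z y) w
}.

Arguments hplus {R} : rename.
Arguments hzero {R} : rename.
Arguments hneg {R} : rename.
Arguments hmul {R} : rename.
Arguments hone {R} : rename.

Section Defs.
Variable R : KrasnerHyperring.

Definition hset := R -> Prop.

Definition hyperideal (I : hset) : Prop :=
  (exists a, I a) /\
  (forall a b z, I a -> I b -> hplus a (hneg b) z -> I z) /\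
  (forall r a, I a -> I (hmul r a)).

Definition proper (I : hset) : Prop := ~ (forall x, I x).

Fixpoint hsum (x : R) (l : list R) : hset :=
  match l with
  | [] => fun z => z = x
  | y :: l' => fun z => exists u, hsum y l' u /\ hplus x u z
  end.

(* product of hyperideals: union of all finite hypersums sum_i a_i o b_i *)
Definition hprod (I J : hset) : hset := fun z =>
  exists (a0 b0 : R) (l : list (R * R)),
    I a0 /\ J b0 /\ (forall p, In p l -> I (fst p) /\ J (snd p)) /\
    hsum (hmul a0 b0) (map (fun p => hmul (fst p) (snd p)) l) z.

(* N^n for n >= 1 : hpow N n = N^(n+1) *)
Fixpoint hpow (N : hset) (n : nat) : hset :=
  match n with
  | O => N
  | S m => hprod (hpow N m) N
  end.

(* N^n with the usual indexing, for n >= 1 *)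
Definition hipow (N : hset) (n : nat) : hset := hpow N (pred n).

Fixpoint mpow (b : R) (k : nat) : R :=
  match k with
  | O => hone
  | S m => hmul b (mpow b m)
  end.

Definition phi_3 (N : hset) : hset := hipow N 3.
Definition phi_w (N : hset) : hset := fun x => forall n, 1 <= n -> hipow N n x.

Definition sigma_primary (sigma : hset -> hset) (N : hset) : Prop :=
  hyperideal N /\ proper N /\
  forall a b, N (hmul a b) -> ~ sigma N (hmul a b) ->
    N a \/ exists k, 1 <= k /\ N (mpow b k).

Definition w_primary (N : hset) : Prop := sigma_primary phi_w N.

End Defs.

Arguments hyperideal {R}.
Arguments proper {R}.
Arguments hipow {R}.
Arguments phi_3 {R}.
Arguments phi_w {R}.
Arguments sigma_primary {R}.
Arguments w_primary {R}.

(* Main.v *)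
Require Import Defs.
From Stdlib Require Import List Classical Lia.
Import ListNotations.

Lemma neg_neg (R : KrasnerHyperring) (x : R) : hneg (hneg x) = x.
Proof.
  symmetry. apply hplus_neg_unique. apply hplus_comm. apply hplus_neg.
Qed.

Lemma distr (R : KrasnerHyperring) (x y z w : R) :
  hplus x y w -> hplus (hmul z x) (hmul z y) (hmul z w).
Proof.
  intro H. apply (proj1 (hmul_distr R x y z (hmul z w))). exists w. auto.
Qed.

Lemma mul_neg (R : KrasnerHyperring) (a b : R) : hmul a (hneg b) = hneg (hmul a b).
Proof.
  apply hplus_neg_unique.
  pose proof (distr R b (hneg b) a hzero (hplus_neg R b)) as H.
  rewrite (hmul_comm R a hzero), hmul_zero in H. exact H.
Qed.

Lemma id_zero (R : KrasnerHyperring) (I : hset R) : hyperideal I -> I hzero.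
Proof.
  intros [[a Ha] [_ H3]]. rewrite <- (hmul_zero R a). apply H3; auto.
Qed.

Lemma id_neg (R : KrasnerHyperring) (I : hset R) x : hyperideal I -> I x -> I (hneg x).
Proof.
  intros HI Hx. pose proof (id_zero R I HI) as H0. destruct HI as [_ [H2 _]].
  apply (H2 hzero x); auto. apply hplus_zero. reflexivity.
Qed.

Lemma id_add (R : KrasnerHyperring) (I : hset R) x y z : hyperideal I -> I x -> I y ->
  hplus x y z -> I z.
Proof.
  intros HI Hx Hy H. pose proof (id_neg R I y HI Hy) as Hny.
  destruct HI as [_ [H2 _]]. apply (H2 x (hneg y)); auto. rewrite neg_neg. exact H.
Qed.

Lemma id_mul (R : KrasnerHyperring) (I : hset R) r x : hyperideal I -> I x -> I (hmul r x).
Proof. intros [_ [_ H3]] Hx. auto. Qed.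

Lemma id_mulr (R : KrasnerHyperring) (I : hset R) r x : hyperideal I -> I x -> I (hmul x r).
Proof. intros HI Hx. rewrite hmul_comm. apply id_mul; auto. Qed.

Lemma rad (R : KrasnerHyperring) (T : hset R) (HT : hyperideal T) x j y :
  T j -> hplus x j y -> forall k, exists t, T t /\ hplus (mpow R x k) t (mpow R y k).
Proof.
  intros Hj H k. induction k as [|k [t [Ht Hk]]].
  - exists hzero. split. apply id_zero; auto. simpl. apply hplus_comm, hplus_zero. reflexivity.
  - simpl.
    pose proof (distr R _ _ y _ Hk) as H1.
    pose proof (distr R _ _ (mpow R x k) _ H) as H2.
    rewrite (hmul_comm R (mpow R x k) x) in H2.
    rewrite (hmul_comm R (mpow R x k) y) in H2.
    destruct (proj1 (hplus_assoc R _ _ _ _) (ex_intro _ _ (conj H2 H1))) as [v [Hv1 Hv2]].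
    exists v. split; auto.
    apply (id_add R T _ _ _ HT (id_mul R T _ _ HT Hj) (id_mul R T _ _ HT Ht) Hv1).
Qed.

Lemma radc (R : KrasnerHyperring) (T : hset R) (HT : hyperideal T) x j y k :
  T j -> hplus x j y -> T (mpow R x k) -> T (mpow R y k).
Proof.
  intros Hj H Hx. destruct (rad R T HT x j y Hj H k) as [t [Ht Hh]].
  apply (id_add R T _ _ _ HT Hx Ht Hh).
Qed.

Lemma hsum_closed (R : KrasnerHyperring) (Q : hset R)
  (HQ : forall x y z, Q x -> Q y -> hplus x y z -> Q z) :
  forall l x z, Q x -> (forall y, In y l -> Q y) -> hsum R x l z -> Q z.
Proof.
  induction l as [|y l IH]; intros x z Hx Hl H; simpl in H.
  - subst. auto.
  - destruct H as [u [Hu Hp]]. apply (HQ x u z); auto.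
    apply (IH y u); auto. apply Hl; simpl; auto. intros; apply Hl; simpl; auto.
Qed.

Lemma hsum_scale (R : KrasnerHyperring) (r : R) :
  forall l x z, hsum R x l z -> hsum R (hmul r x) (map (hmul r) l) (hmul r z).
Proof.
  induction l as [|y l IH]; intros x z H; simpl in *.
  - subst. reflexivity.
  - destruct H as [u [Hu Hp]]. exists (hmul r u). split; auto. apply distr; auto.
Qed.

Lemma hsum_app (R : KrasnerHyperring) :
  forall l1 m x n l2 y z, hsum R m l1 x -> hsum R n l2 y -> hplus x y z ->
    hsum R m (l1 ++ n :: l2) z.
Proof.
  induction l1 as [|m' l1 IH]; intros m x n l2 y z Hx Hy H; simpl in *.
  - subst. exists y. auto.
  - destruct Hx as [u [Hu Hp]].
    destruct (proj1 (hplus_assoc R m u y z) (ex_intro _ x (conj Hp H))) as [v [Hv1 Hv2]].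
    exists v. split; auto. apply (IH m' u n l2 y v); auto.
Qed.

Lemma S_scale (R : KrasnerHyperring) (T : hset R) (HT : hyperideal T) r x :
  hprod R T T x -> hprod R T T (hmul r x).
Proof.
  intros [a0 [b0 [l [Ha [Hb [Hl Hs]]]]]].
  exists (hmul r a0), b0, (map (fun p => (hmul r (fst p), snd p)) l).
  split. apply id_mul; auto. split; auto. split.
  - intros p Hp. apply in_map_iff in Hp. destruct Hp as [q [Hq Hin]]. subst p. simpl.
    destruct (Hl q Hin). split; auto. apply id_mul; auto.
  - rewrite <- hmul_assoc.
    replace (map (fun p : R * R => hmul (fst p) (snd p))
       (map (fun p : R * R => (hmul r (fst p), snd p)) l))
      with (map (hmul r) (map (fun p : R * R => hmul (fst p) (snd p)) l)).
    + apply hsum_scale; auto.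
    + rewrite !map_map. apply map_ext. intros; simpl. apply hmul_assoc.
Qed.

Lemma S_add (R : KrasnerHyperring) (T : hset R) x y z :
  hprod R T T x -> hprod R T T y -> hplus x y z -> hprod R T T z.
Proof.
  intros [a0 [b0 [l [Ha [Hb [Hl Hs]]]]]] [c0 [d0 [l2 [Hc [Hd [Hl2 Hs2]]]]]] H.
  exists a0, b0, (l ++ (c0, d0) :: l2). split; auto. split; auto. split.
  - intros p Hp. apply in_app_or in Hp. destruct Hp as [Hp|[Hp|Hp]]; auto.
    subst p; simpl; auto.
  - rewrite map_app. simpl. eapply hsum_app; eauto.
Qed.

Lemma mono (R : KrasnerHyperring) (I I' J : hset R) z :
  (forall x, I x -> I' x) -> hprod R I J z -> hprod R I' J z.
Proof.
  intros Hi [a0 [b0 [l [Ha [Hb [Hl Hs]]]]]].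
  exists a0, b0, l. split; auto. split; auto. split; auto.
  intros p Hp. destruct (Hl p Hp). auto.
Qed.

Lemma T3_S (R : KrasnerHyperring) (T : hset R) (HT : hyperideal T) z :
  hprod R (hprod R T T) T z -> hprod R T T z.
Proof.
  intros [a0 [b0 [l [Ha [Hb [Hl Hs]]]]]].
  refine (hsum_closed R (hprod R T T) (S_add R T) _ _ _ _ _ Hs).
  - rewrite hmul_comm. apply S_scale; auto.
  - intros y Hy. apply in_map_iff in Hy. destruct Hy as [p [Hp Hin]]. subst y.
    destruct (Hl p Hin). rewrite hmul_comm. apply S_scale; auto.
Qed.

Theorem mainTheorem13 (R : KrasnerHyperring) (phi : hset R -> hset R)
  (phi_range : forall N : hset R, hyperideal N ->
      hyperideal (phi N) \/ (forall x, ~ phi N x))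
  (phi_le_phi3 : forall N : hset R, hyperideal N ->
      forall x, phi N x -> phi_3 N x)
  (T : hset R) (HT : hyperideal T) (HTp : proper T)
  (HTphi : sigma_primary phi T) :
  w_primary T.
Proof.
  destruct HTphi as [_ [_ Hprim]].
  split; [exact HT|]. split; [exact HTp|].
  intros a b Hab Hnw.
  destruct (classic (phi T (hmul a b))) as [Hp|Hnp]; [|exact (Hprim a b Hab Hnp)].
  destruct (classic (T a)) as [Ha|Ha]; [left; exact Ha|].
  destruct (classic (exists k, 1 <= k /\ T (mpow R b k))) as [Hb|Hb]; [right; exact Hb|].
  exfalso. apply Hnw.
  assert (HP : hyperideal (phi T)).
  { destruct (phi_range T HT) as [H|H]; auto. exfalso; exact (H _ Hp). }
  assert (C0 : forall x y, ~ T x -> ~ (exists k, 1 <= k /\ T (mpow R y k)) ->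
     T (hmul x y) -> phi T (hmul x y)).
  { intros x y Hx Hy Hxy. apply NNPP. intro Hn.
    destruct (Hprim x y Hxy Hn); auto. }
  assert (NT : forall x i z, ~ T x -> T i -> hplus x i z -> ~ T z).
  { intros x i z Hx Hi H Hz. apply Hx.
    apply (id_add R T z (hneg i) x HT Hz (id_neg R T i HT Hi)).
    apply (hplus_reversible R x i z H). }
  assert (NR : forall y j w, ~ (exists k, 1 <= k /\ T (mpow R y k)) -> T j -> hplus y j w ->
     ~ (exists k, 1 <= k /\ T (mpow R w k))).
  { intros y j w Hy Hj H [k [Hk Hw]]. apply Hy. exists k. split; auto.
    apply (radc R T HT w (hneg j) y k (id_neg R T j HT Hj)); auto.
    apply (hplus_reversible R y j w H). }
  assert (L1 : forall x y j, ~ T x -> ~ (exists k, 1 <= k /\ T (mpow R y k)) ->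
     T (hmul x y) -> T j -> phi T (hmul x j)).
  { intros x y j Hx Hy Hxy Hj.
    destruct (hplus_nonempty R y j) as [w Hw].
    pose proof (distr R _ _ x _ Hw) as H1.
    assert (Hxw : T (hmul x w)) by
      (apply (id_add R T _ _ _ HT Hxy (id_mul R T _ _ HT Hj) H1)).
    pose proof (C0 x w Hx (NR y j w Hy Hj Hw) Hxw) as Pxw.
    pose proof (C0 x y Hx Hy Hxy) as Pxy.
    apply (id_add R (phi T) _ _ _ HP (id_neg R _ _ HP Pxy) Pxw).
    apply (hplus_reversible R _ _ _ H1). }
  assert (Main : forall i j, T i -> T j -> phi T (hmul i j)).
  { intros i j Hi Hj.
    destruct (hplus_nonempty R a i) as [z Hz].
    assert (Hzn : ~ T z) by exact (NT a i z Ha Hi Hz).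
    pose proof (distr R _ _ b _ Hz) as H1.
    assert (Hzb : T (hmul z b)).
    { rewrite hmul_comm. apply (id_add R T (hmul b a) (hmul b i) _ HT); [| |exact H1].
      rewrite hmul_comm; exact Hab. apply id_mul; auto. }
    pose proof (L1 z b j Hzn Hb Hzb Hj) as Pzj.
    pose proof (L1 a b j Ha Hb Hab Hj) as Paj.
    pose proof (distr R _ _ j _ Hz) as H2.
    pose proof (proj1 (hplus_reversible R _ _ _ H2)) as H3.
    rewrite hmul_comm. apply (id_add R (phi T) (hneg (hmul j a)) (hmul j z) _ HP); [| |exact H3].
    apply id_neg; auto. rewrite hmul_comm; exact Paj.
    rewrite hmul_comm; exact Pzj. }
  assert (SP : forall z, hprod R T T z -> phi T z).
  { intros z [a0 [b0 [l [Ha0 [Hb0 [Hl Hs]]]]]].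
    refine (hsum_closed R (phi T) (fun x y z => id_add R (phi T) x y z HP) _ _ _
      (Main a0 b0 Ha0 Hb0) _ Hs).
    intros y Hy. apply in_map_iff in Hy. destruct Hy as [p [Hp' Hin]]. subst y.
    destruct (Hl p Hin). apply Main; auto. }
  assert (PT3 : forall z, phi T z -> hprod R (hprod R T T) T z).
  { intros z Hz. exact (phi_le_phi3 T HT z Hz). }
  assert (Ind : forall m z, hprod R T T z -> hpow R T (S m) z).
  { induction m as [|m IH]; intros z Hz.
    - exact Hz.
    - simpl. apply (mono R (hprod R T T)).
      + intros x Hx. apply IH; exact Hx.
      + apply PT3, SP, Hz. }
  intros n Hn. unfold hipow.
  destruct n as [|n]; [lia|]. destruct n as [|m].
  - exact Hab.
  - simpl pred. apply Ind. apply T3_S; auto.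
Qed.
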